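(* Consider a team-against-team zero-sum game with standard Borel state space $\Omega_0$, Team 1 (minimizer, $N_1$ players) and Team 2 (maximizer, $N_2$ players), standard Borel measurement spaces $\mathbb{Y}^j_i$, compact standard Borel action spaces $\mathbb{U}^j_i$, and a cost $c:\Omega_0\times\prod_j\mathbb{U}^j_1\times\prod_j\mathbb{U}^j_2\to\mathbb{R}$ that is measurable, bounded and continuous in the players' actions for every $\omega_0$. Each team uses team policies with common randomness within the team (randomness independent across teams). Consider information structures (probability measures on $\Omega_0\times\prod_j\mathbb{Y}^j_1\times\prod_j\mathbb{Y}^j_2$) such that for each team $i$ the marginal on $\Omega_0\times\prod_{j}\mathbb{Y}^j_i$ is absolutely continuous with respect to a product $\mu_{0}\otimes\bigotimes_j\bar Q^j_i$ of probability measures, so that a saddle-point equilibrium exists with value $J^*(c,\cdot)$. Then $J^*(c,\cdot)$ is continuous under total variation on this class: if $\mu_n,\mu$ belong to this class and $\|\mu_n-\mu\|_{TV}\to0$, then $J^*(c,\mu_n)\to J^*(c,\mu)$.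
   Context: Team policies with common randomness: $u^j_i=\gamma^j_i(y^j_i,z_i)$ where $z_i\in[0,1]^{N_i}$ is independent of the state and measurements and of the other team's randomness. The equilibrium value $J^*(c,\mu)$ is the common value of $\inf_{\bar\gamma_1}\sup_{\bar\gamma_2}$ and $\sup_{\bar\gamma_2}\inf_{\bar\gamma_1}$ of $E^{\mu,\bar\gamma_1,\bar\gamma_2}[c(\omega_0,u_1,u_2)]$. $\|P-Q\|_{TV}=\sup_{\|f\|_\infty\le1}|\int f\,dP-\int f\,dQ|$. *)

(* Defs.v *)
From HB Require Import structures.
From mathcomp Require Import all_boot all_order all_algebra.
From mathcomp Require Import all_classical all_reals all_analysis.

Set Implicit Arguments.
Unset Strict Implicit.
Unset Printing Implicit Defensive.
Import Order.TTheory GRing.Theory Num.Theory.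
Import numFieldNormedType.Exports.
Local Open Scope classical_set_scope.
Local Open Scope ring_scope.

Definition borelT (T : ptopologicalType) : Type := T.

Section borel_measurable.
Context (T : ptopologicalType).

HB.instance Definition _ := Pointed.on (borelT T).

Definition borel_sets : set (set (borelT T)) := <<s (@open T) >>.

Let borel0 : borel_sets set0.
Proof. exact: sigma_algebra0. Qed.
Let borelC A : borel_sets A -> borel_sets (~` A).
Proof. exact: sigma_algebraC. Qed.
Let borelU (F : (set (borelT T))^nat) :
  (forall i, borel_sets (F i)) -> borel_sets (\bigcup_i (F i)).
Proof. exact: sigma_algebra_bigcup. Qed.

HB.instance Definition _ := @isMeasurable.Build default_measure_display
  (borelT T) borel_sets borel0 borelC borelU.
End borel_measurable.

Definition Mprod (n : nat) (d : 'I_n -> measure_display)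
  (T : forall i, measurableType (d i)) : Type := forall i, T i.

Section Mprod_measurable.
Context (n : nat) (d : 'I_n -> measure_display)
  (T : forall i, measurableType (d i)).

HB.instance Definition _ := Pointed.on (forall i, T i).
HB.instance Definition _ := Pointed.on (Mprod T).

Definition cylinders : set (set (Mprod T)) :=
  [set A | exists i (B : set (T i)), measurable B /\
                                     A = (fun x : Mprod T => x i) @^-1` B].

Definition Mprod_sets : set (set (Mprod T)) := <<s cylinders >>.

Let Mprod0 : Mprod_sets set0.
Proof. exact: sigma_algebra0. Qed.
Let MprodC A : Mprod_sets A -> Mprod_sets (~` A).
Proof. exact: sigma_algebraC. Qed.
Let MprodU (F : (set (Mprod T))^nat) :
  (forall i, Mprod_sets (F i)) -> Mprod_sets (\bigcup_i (F i)).
Proof. exact: sigma_algebra_bigcup. Qed.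

HB.instance Definition _ := @isMeasurable.Build default_measure_display
  (Mprod T) Mprod_sets Mprod0 MprodC MprodU.
End Mprod_measurable.

(* Standard Borel spaces: measurable spaces Borel-isomorphic to a Borel       *)
(* subset of the real line (equivalently, of a Polish space, by Kuratowski).  *)
Definition standard_borel (R : realType) d (T : measurableType d) : Prop :=
  exists f : T -> R, [/\ measurable_fun [set: T] f, injective f,
    measurable (range f) &
    forall A : set T, measurable A -> measurable (f @` A)].

Definition tv_dist (R : realType) d (X : measurableType d)
  (P Q : probability X R) : \bar R :=
  ereal_sup [set `| (\int[P]_x (f x)%:E - \int[Q]_x (f x)%:E)%E |%E
            | f in [set f : X -> R | measurable_fun [set: X] f /\
                                     forall x, `|f x| <= 1]].

Section game.
Context (R : realType) (dO : measure_display) (Om : measurableType dO).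

Section team.
Context (N : nat) (dY : 'I_N -> measure_display)
  (Y : forall j, measurableType (dY j)) (U : 'I_N -> pseudoPMetricType R).

Definition Act (j : 'I_N) := borelT (U j).

(* A team policy with common randomness: a distribution eta of the common
   random variable z in [0,1]^N (independent of everything else), and
   measurable maps gamma^j : Y^j x [0,1]^N -> U^j, u^j = gamma^j(y^j, z). *)
Definition team_policy : Type :=
  (probability (N.-tuple R) R * (forall j, Y j * N.-tuple R -> Act j))%type.

Definition unit_cube : set (N.-tuple R) :=
  [set z | forall i : 'I_N, 0 <= tnth z i <= 1].

Definition admissible (p : team_policy) : Prop :=
  p.1 unit_cube = 1%E /\
  forall j, measurable_fun [set: Y j * N.-tuple R] (p.2 j).

Definition team_actions (p : team_policy) (y : Mprod Y) (z : N.-tuple R)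
  : Mprod Act := fun j => p.2 j (y j, z).

Definition is_product_measure (mu0 : probability Om R)
  (Q : forall j, probability (Y j) R)
  (P : {measure set (Om * Mprod Y)%type -> \bar R}) : Prop :=
  forall (A0 : set Om) (A : forall j, set (Y j)),
    measurable A0 -> (forall j, measurable (A j)) ->
    P (A0 `*` [set y : Mprod Y | forall j, A j (y j)]) =
    (mu0 A0 * \prod_(j < N) Q j (A j))%E.

Definition ac_wrt_product (m : set (Om * Mprod Y)%type -> \bar R) : Prop :=
  exists (mu0 : probability Om R) (Q : forall j, probability (Y j) R)
         (P : {measure set (Om * Mprod Y)%type -> \bar R}),
    is_product_measure mu0 Q P /\ m `<< P.
End team.

Context (N1 N2 : nat)
  (dY1 : 'I_N1 -> measure_display) (Y1 : forall j, measurableType (dY1 j))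
  (dY2 : 'I_N2 -> measure_display) (Y2 : forall j, measurableType (dY2 j))
  (U1 : 'I_N1 -> pseudoPMetricType R) (U2 : 'I_N2 -> pseudoPMetricType R).

Definition Info := (Om * Mprod Y1 * Mprod Y2)%type.
Definition Outcome := (Om * Mprod (Act U1) * Mprod (Act U2))%type.

Definition in_class (mu : probability Info R) : Prop :=
  ac_wrt_product (pushforward mu (fun x : Info => x.1)) /\
  ac_wrt_product (pushforward mu (fun x : Info => (x.1.1, x.2))).

Variable c : Outcome -> R.

(* expected cost E^{mu, g1, g2}[c(w0, u1, u2)], the common randomness of
   the two teams being independent of each other and of (w0, y). *)
Definition expected_cost (mu : probability Info R)
  (p1 : team_policy Y1 U1) (p2 : team_policy Y2 U2) : \bar R :=
  (\int[p1.1]_z1 \int[p2.1]_z2 \int[mu]_x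
     (c (x.1.1, team_actions p1 x.1.2 z1, team_actions p2 x.2 z2))%:E)%E.

Definition upper_value (mu : probability Info R) : \bar R :=
  ereal_inf [set ereal_sup [set expected_cost mu p1 p2
                           | p2 in @admissible _ _ Y2 U2]
            | p1 in @admissible _ _ Y1 U1].

Definition lower_value (mu : probability Info R) : \bar R :=
  ereal_sup [set ereal_inf [set expected_cost mu p1 p2
                           | p1 in @admissible _ _ Y1 U1]
            | p2 in @admissible _ _ Y2 U2].

End game.

(* Main.v *)
Require Import Defs.
From HB Require Import structures.
From mathcomp Require Import all_boot all_order all_algebra.
From mathcomp Require Import all_classical all_reals all_analysis.
From mathcomp Require Import ring lra.
Import Order.TTheory GRing.Theory Num.Theory.
Import numFieldNormedType.Exports.
Local Open Scope classical_set_scope.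
Local Open Scope ring_scope.


Import HBNNSimple.
Import measurable_realfun.

Section shift.
Context d (T : measurableType d) (R : realType) (s : {nnsfun T >-> R}) (e : R).
Definition shf : T -> R := fun x => Num.max (s x - e) 0.
Lemma shf_meas : measurable_fun setT shf.
Proof.
apply: measurable_maxr; last exact: measurable_cst.
by apply: measurable_funB => //; exact: measurable_cst.
Qed.
HB.instance Definition _ := isMeasurableFun.Build d _ T R shf shf_meas.
Lemma shf_fin : finite_set (range shf).
Proof.
have -> : range shf = (fun r => Num.max (r - e) 0) @` range s.
  apply/seteqP; split => y.
    by move=> [x _ <-]; exists (s x) => //; exists x.
  by move=> [r [x _ <-] <-]; exists x.
by apply: finite_image; exact: fimfunP.
Qed.
HB.instance Definition _ := FiniteImage.Build T R shf shf_fin.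
Lemma shf_ge0 : forall x, 0 <= shf x.
Proof. by move=> x; rewrite /shf le_max lexx orbT. Qed.
HB.instance Definition _ := isNonNegFun.Build T R shf shf_ge0.
Definition shf_nnsfun : {nnsfun T >-> R} := shf.
End shift.

Section lower.
Context d (T : measurableType d) (R : realType) (P : probability T R).
Local Open Scope ereal_scope.

Definition Lo (h : T -> R) := \int[P]_x (h x)%:E.

Lemma Lo_le (h1 h2 : T -> R) : (forall x, (0 <= h1 x)%R) ->
  (forall x, (h1 x <= h2 x)%R) -> Lo h1 <= Lo h2.
Proof.
move=> h10 h12; rewrite /Lo.
rewrite [X in X <= _]ge0_integralTE; last by move=> x; rewrite lee_fin.
rewrite [X in _ <= X]ge0_integralTE; last by move=> x; rewrite lee_fin (le_trans (h10 x)).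
apply: le_ereal_sup => _ [sf hs <-]; exists sf => //= x.
by apply: (le_trans (hs x)); rewrite lee_fin.
Qed.

Lemma Lo_cst (K : R) : Lo (fun=> K) = K%:E.
Proof.
rewrite /Lo (_ : (fun x => _) = cst K%:E) //.
rewrite integral_cst //.
by rewrite -[RHS]mule1; congr (_ * _); exact: probability_setT.
Qed.

Lemma Lo_shift (h : T -> R) (e : R) : (forall x, (0 <= h x)%R) -> (0 <= e)%R ->
  Lo (fun x => h x + e)%R <= Lo h + e%:E.
Proof.
move=> h0 e0; rewrite {1}/Lo ge0_integralTE => [|x]; last first.
  by rewrite lee_fin addr_ge0.
apply: ge_ereal_sup => _ [sf hs <-].
have h1 : sintegral P sf <= sintegral P (add_nnsfun (@shf_nnsfun _ _ _ sf e) (cst_nnsfun T (NngNum e0))).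
  apply: le_sintegral => x /=; rewrite /shf /=.
  by rewrite -lerBlDr le_max lexx.
apply: (le_trans h1); rewrite sintegralD leeD//.
  rewrite /Lo ge0_integralTE => [|x]; last by rewrite lee_fin.
  apply: ereal_sup_ubound; exists (@shf_nnsfun _ _ _ sf e) => //= x.
  rewrite lee_fin /shf ge_max h0 andbT lerBlDr.
  by have := hs x; rewrite lee_fin.
rewrite -integralT_nnsfun /= (_ : (fun x => _) = cst e%:E) // integral_cst //.
by rewrite le_eqVlt; apply/orP; left; apply/eqP; rewrite -[RHS]mule1; congr (_ * _); exact: probability_setT.
Qed.

Lemma Lo_fin (h : T -> R) (K : R) : (forall x, (0 <= h x)%R) ->
  (forall x, (h x <= K)%R) -> exists r, Lo h = r%:E /\ (0 <= r <= K)%R.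
Proof.
move=> h0 hK.
have L0 : 0 <= Lo h by apply: integral_ge0 => x _; rewrite lee_fin.
have LK : Lo h <= K%:E by rewrite -Lo_cst; apply: Lo_le.
have fin : Lo h \is a fin_num by rewrite ge0_fin_numE // (le_lt_trans LK) ?ltry.
exists (fine (Lo h)); rewrite fineK //; split => //.
by rewrite -!lee_fin fineK // L0.
Qed.

Definition posp (a : T -> R) := fun x => Num.max (a x) 0%R.
Definition negp (a : T -> R) := fun x => Num.max (- a x)%R 0%R.

Lemma I_split (a : T -> R) : Lo a = Lo (posp a) - Lo (negp a).
Proof.
rewrite /Lo integralE; congr (_ - _); apply: eq_integral => x _.
  by rewrite funeposE /posp EFin_max.
by rewrite funenegE /negp EFin_max EFinN.
Qed.

Lemma maxr_close (a b e : R) : (`|a - b| <= e)%R ->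
  (Num.max a 0 <= Num.max b 0 + e)%R.
Proof.
rewrite ler_norml => /andP[h1 h2].
have hb : (b <= Num.max b 0)%R by rewrite le_max lexx.
have hb0 : (0 <= Num.max b 0)%R by rewrite le_max lexx orbT.
have e0 : (0 <= e)%R by lra.
rewrite ge_max; apply/andP; split; lra.
Qed.

Lemma pos_bnd (a : T -> R) K : (forall x, (`|a x| <= K)%R) ->
  exists r, Lo (posp a) = r%:E /\ (0 <= r <= K)%R.
Proof.
move=> aK; apply: Lo_fin => x; rewrite /posp.
  by rewrite le_max lexx orbT.
rewrite ge_max; have := aK x; rewrite ler_norml => /andP[h1 h2].
apply/andP; split => //; lra.
Qed.

Lemma neg_bnd (a : T -> R) K : (forall x, (`|a x| <= K)%R) ->
  exists r, Lo (negp a) = r%:E /\ (0 <= r <= K)%R.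
Proof.
move=> aK; apply: Lo_fin => x; rewrite /negp.
  by rewrite le_max lexx orbT.
rewrite ge_max; have := aK x; rewrite ler_norml => /andP[h1 h2].
apply/andP; split => //; lra.
Qed.

Lemma I_fin (a : T -> R) (K : R) : (forall x, (`|a x| <= K)%R) ->
  exists r, Lo a = r%:E /\ (`|r| <= K)%R.
Proof.
move=> aK.
have [p [Hp /andP[p0 pK]]] := @pos_bnd _ _ aK.
have [n [Hn /andP[n0 nK]]] := @neg_bnd _ _ aK.
exists (p - n)%R; rewrite I_split Hp Hn; split => //.
rewrite ler_norml; apply/andP; split; lra.
Qed.

Lemma I_close (a b : T -> R) (K e : R) : (forall x, (`|a x| <= K)%R) ->
  (forall x, (`|b x| <= K)%R) -> (forall x, (`|a x - b x| <= e)%R) ->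
  (`|fine (Lo a) - fine (Lo b)| <= e *+ 4)%R.
Proof.
move=> aK bK abe.
have e0 : (0 <= e)%R by apply: le_trans (abe point); rewrite normr_ge0.
have [pa [Hpa /andP[pa0 paK]]] := @pos_bnd _ _ aK.
have [na [Hna /andP[na0 naK]]] := @neg_bnd _ _ aK.
have [pb [Hpb /andP[pb0 pbK]]] := @pos_bnd _ _ bK.
have [nb [Hnb /andP[nb0 nbK]]] := @neg_bnd _ _ bK.
have key : forall (f g : T -> R) rf rg, (forall x, (0 <= g x)%R) ->
    (forall x, (f x <= g x + e)%R) -> (forall x, (0 <= f x)%R) ->
    Lo f = rf%:E -> Lo g = rg%:E -> (rf <= rg + e)%R.
  move=> f g rf rg g0 fg f0 Hf Hg; rewrite -lee_fin EFinD -Hf -Hg.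
  apply: le_trans (@Lo_shift g e g0 e0); exact: Lo_le.
have ba : forall x, (`|b x - a x| <= e)%R by move=> x; rewrite distrC.
have na' : forall x, (`|- a x - - b x| <= e)%R.
  by move=> x; rewrite (_ : (- a x - - b x = b x - a x)%R) ?ba //; rewrite opprK addrC.
have nb' : forall x, (`|- b x - - a x| <= e)%R.
  by move=> x; rewrite (_ : (- b x - - a x = a x - b x)%R) ?abe //; rewrite opprK addrC.
have zp : forall (c : T -> R) x, (0 <= posp c x)%R.
  by move=> c x; rewrite /posp le_max lexx orbT.
have zn : forall (c : T -> R) x, (0 <= negp c x)%R.
  by move=> c x; rewrite /negp le_max lexx orbT.
have h1 := key _ _ _ _ (zp b) (fun x => @maxr_close _ _ _ (abe x)) (zp a) Hpa Hpb.
have h2 := key _ _ _ _ (zp a) (fun x => @maxr_close _ _ _ (ba x)) (zp b) Hpb Hpa.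
have h3 := key _ _ _ _ (zn b) (fun x => @maxr_close _ _ _ (na' x)) (zn a) Hna Hnb.
have h4 := key _ _ _ _ (zn a) (fun x => @maxr_close _ _ _ (nb' x)) (zn b) Hnb Hna.
rewrite (I_split a) (I_split b) Hpa Hna Hpb Hnb /=.
rewrite !mulrS mulr0n addr0.
clear -h1 h2 h3 h4 e0; rewrite ler_norml; apply/andP; split; lra.
Qed.
End lower.


Section supinf.
Context (R : realType).
Local Open Scope ereal_scope.

Lemma sup_close (I : Type) (S : set I) (f g : I -> \bar R) (d : R) :
  (forall i, S i -> f i <= g i + d%:E) ->
  ereal_sup (f @` S) <= ereal_sup (g @` S) + d%:E.
Proof.
move=> fg; apply: ge_ereal_sup => _ [i Si <-].
apply: le_trans (fg i Si) _; rewrite leeD2r //.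
by apply: ereal_sup_ubound; exists i.
Qed.

Lemma inf_close (I : Type) (S : set I) (f g : I -> \bar R) (d : R) :
  (forall i, S i -> f i <= g i + d%:E) ->
  ereal_inf (f @` S) <= ereal_inf (g @` S) + d%:E.
Proof.
move=> fg; rewrite -leeBlDr //; apply: le_ereal_inf_tmp => _ [i Si <-].
rewrite leeBlDr //; apply: le_trans (fg i Si).
by apply: ereal_inf_lbound; exists i.
Qed.

Lemma close_cvg (u : nat -> \bar R) (v : \bar R) (dd : nat -> R) :
  dd n @[n --> \oo] --> 0%R ->
  (\forall n \near \oo, u n <= v + (dd n)%:E /\ v <= u n + (dd n)%:E) ->
  u n @[n --> \oo] --> v.
Proof.
move=> d0 H; case: v H => [r| |] H.
- apply/fine_cvgP; split.
    near=> n; have [h1 h2] : u n <= r%:E + (dd n)%:E /\ r%:E <= u n + (dd n)%:E.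
      by near: n.
    rewrite fin_numE; apply/andP; split.
      by apply/negP => /eqP un; move: h2; rewrite un.
    by apply/negP => /eqP un; move: h1; rewrite un.
  apply/cvgrPdist_le => eps epos.
  move/cvgrPdist_le : d0 => /(_ eps epos) d0.
  near=> n; have [h1 h2] : u n <= r%:E + (dd n)%:E /\ r%:E <= u n + (dd n)%:E.
    by near: n.
  have dn : (`|0 - dd n| <= eps)%R by near: n.
  have fu : u n \is a fin_num.
    rewrite fin_numE; apply/andP; split.
      by apply/negP => /eqP un; move: h2; rewrite un.
    by apply/negP => /eqP un; move: h1; rewrite un.
  move: h1 h2; rewrite -(fineK fu) -!EFinD !lee_fin /= => h1 h2.
  move: dn; rewrite sub0r normrN !ler_norml => /andP[dn1 dn2].
  apply/andP; split; lra.
- apply: cvg_near_cst; near=> n.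
  have [_ h2] : u n <= +oo + (dd n)%:E /\ +oo <= u n + (dd n)%:E by near: n.
  move: h2; case: (u n) => //= s; by rewrite -EFinD leye_eq.
- apply: cvg_near_cst; near=> n.
  have [h1 _] : u n <= -oo + (dd n)%:E /\ -oo <= u n + (dd n)%:E by near: n.
  by move: h1; rewrite addNye leeNy_eq => /eqP.
Unshelve. all: by end_near.
Qed.
End supinf.


Lemma Mprod_coord (n : nat) (d : 'I_n -> measure_display)
  (T : forall i, measurableType (d i)) (i : 'I_n) :
  measurable_fun [set: Mprod T] (fun x : Mprod T => x i).
Proof.
move=> _ B mB; rewrite setTI; apply: sub_sigma_algebra.
by exists i, B.
Qed.

Lemma Mprod_meas (n : nat) (d : 'I_n -> measure_display)
  (T : forall i, measurableType (d i)) d' (X : measurableType d')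
  (f : X -> Mprod T) :
  (forall i, measurable_fun [set: X] (fun x => f x i)) ->
  measurable_fun [set: X] f.
Proof.
move=> hf; apply: (measurability (@cylinders n d T)) => //.
move=> _ [A [i [B [mB ->]]] <-].
have := hf i measurableT B mB.
by congr measurable.
Qed.

Section gmeas.
Context (R : realType) (dO : measure_display) (Om : measurableType dO)
  (N1 N2 : nat)
  (dY1 : 'I_N1 -> measure_display) (Y1 : forall j, measurableType (dY1 j))
  (dY2 : 'I_N2 -> measure_display) (Y2 : forall j, measurableType (dY2 j))
  (U1 : 'I_N1 -> pseudoPMetricType R) (U2 : 'I_N2 -> pseudoPMetricType R)
  (c : Outcome Om U1 U2 -> R)
  (c_meas : measurable_fun [set: Outcome Om U1 U2] c).

Lemma ta_meas (N : nat) (dY : 'I_N -> measure_display)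
  (Y : forall j, measurableType (dY j)) (U : 'I_N -> pseudoPMetricType R)
  (p : team_policy Y U) (z : N.-tuple R) :
  admissible p -> measurable_fun [set: Mprod Y] (fun y => team_actions p y z).
Proof.
move=> [_ hp]; apply: Mprod_meas => i; rewrite /team_actions.
apply: (measurableT_comp (hp i)).
apply: measurable_fun_pair; first exact: Mprod_coord.
exact: measurable_cst.
Qed.

Lemma g_meas (p1 : team_policy Y1 U1) (p2 : team_policy Y2 U2) z1 z2 :
  admissible p1 -> admissible p2 ->
  measurable_fun [set: Info Om Y1 Y2]
    (fun x : Info Om Y1 Y2 => c (x.1.1, team_actions p1 x.1.2 z1, team_actions p2 x.2 z2)).
Proof.
move=> a1 a2; apply: (measurableT_comp c_meas).
apply: measurable_fun_pair; first apply: measurable_fun_pair.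
- exact: measurableT_comp measurable_fst measurable_fst.
- apply: measurableT_comp (@ta_meas _ _ _ _ p1 z1 a1) _.
  exact: measurableT_comp measurable_snd measurable_fst.
- exact: measurableT_comp (@ta_meas _ _ _ _ p2 z2 a2) measurable_snd.
Qed.
End gmeas.


Import measurable_realfun.
Local Open Scope classical_set_scope.
Local Open Scope ring_scope.

Lemma tv_step (R : realType) d (X : measurableType d) (P Q : probability X R)
  (g : X -> R) (M : R) : measurable_fun [set: X] g -> (forall x, `|g x| <= M) ->
  tv_dist P Q \is a fin_num ->
  `|fine (\int[P]_x (g x)%:E)%E - fine (\int[Q]_x (g x)%:E)%E| <=
    (`|M| + 1) * fine (tv_dist P Q).
Proof.
move=> mg gM ftv.
set M1 := `|M| + 1.
have M10 : 0 < M1 by rewrite /M1 ltr_pwDr // normr_ge0.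
set h := fun x => g x / M1.
have mh : measurable_fun [set: X] h.
  by apply: measurable_funM => //; exact: measurable_cst.
have h1 : forall x, `|h x| <= 1.
  move=> x; rewrite /h normrM normfV (gtr0_norm M10) ler_pdivrMr // mul1r.
  apply: le_trans (gM x) _; rewrite /M1; apply: le_trans (ler_norm M) _.
  by rewrite lerDl.
have ub : (`|(\int[P]_x (h x)%:E - \int[Q]_x (h x)%:E)%E| <= tv_dist P Q)%E.
  by apply: ereal_sup_ubound; exists h.
have eq : forall nu : probability X R,
    (\int[nu]_x (g x)%:E = M1%:E * \int[nu]_x (h x)%:E)%E.
  move=> nu; rewrite -integralZl //; last first.
    apply: measurable_bounded_integrable => //.
      by apply: le_lt_trans (probability_le1 nu measurableT) (ltry 1).
    rewrite /bounded_near; near=> K; move=> x _ /=; apply: le_trans (h1 x) _; near: K.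
    by apply: nbhs_pinfty_ge; rewrite num_real.
  apply: eq_integral => x _; rewrite -EFinM; congr EFin.
  by rewrite /h mulrC divfK // gt_eqF.
have [a [Ha _]] := @I_fin _ _ _ P _ _ h1.
have [b [Hb _]] := @I_fin _ _ _ Q _ _ h1.
move: ub; rewrite /Lo in Ha Hb; rewrite Ha Hb -(fineK ftv) /= lee_fin => ub.
rewrite !eq Ha Hb /= -mulrBr normrM (gtr0_norm M10).
by rewrite ler_pM2l.
Unshelve. all: by end_near.
Qed.

Definition fbnd (R : realType) (M : R) (x : \bar R) :=
  exists r, x = r%:E /\ `|r| <= M.

Lemma layer (R : realType) d (T : measurableType d) (P : probability T R)
  (F G : T -> \bar R) (M e : R) :
  (forall t, @fbnd R M (F t)) -> (forall t, @fbnd R M (G t)) ->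
  (forall t, `|fine (F t) - fine (G t)| <= e) ->
  [/\ @fbnd R M (\int[P]_t F t)%E, @fbnd R M (\int[P]_t G t)%E &
      `|fine (\int[P]_t F t)%E - fine (\int[P]_t G t)%E| <= e *+ 4].
Proof.
move=> hF hG hFG.
have eF : F = (fun t => (fine (F t))%:E).
  by apply/funext => t; have [r [-> _]] := hF t.
have eG : G = (fun t => (fine (G t))%:E).
  by apply/funext => t; have [r [-> _]] := hG t.
have bF : forall t, `|fine (F t)| <= M by move=> t; have [r [-> ?]] := hF t.
have bG : forall t, `|fine (G t)| <= M by move=> t; have [r [-> ?]] := hG t.
rewrite eF eG; split.
- by have [r [Hr ?]] := @I_fin _ _ _ P _ _ bF; exists r.
- by have [r [Hr ?]] := @I_fin _ _ _ P _ _ bG; exists r.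
- exact: (@I_close _ _ _ P _ _ M e bF bG hFG).
Qed.

Lemma fbnd_close (R : realType) (M e : R) (x y : \bar R) :
  @fbnd R M x -> @fbnd R M y -> `|fine x - fine y| <= e ->
  (x <= y + e%:E)%E /\ (y <= x + e%:E)%E.
Proof.
move=> [a [-> _]] [b [-> _]] /=; rewrite ler_norml => /andP[h1 h2].
by rewrite -!EFinD !lee_fin; split; lra.
Qed.


Theorem theorem9 (R : realType)
  (dO : measure_display) (Om : measurableType dO)
  (N1 N2 : nat)
  (dY1 : 'I_N1 -> measure_display) (Y1 : forall j, measurableType (dY1 j))
  (dY2 : 'I_N2 -> measure_display) (Y2 : forall j, measurableType (dY2 j))
  (U1 : 'I_N1 -> pseudoPMetricType R) (U2 : 'I_N2 -> pseudoPMetricType R)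
  (c : Outcome Om U1 U2 -> R)
  (hOm : standard_borel R Om)
  (hY1 : forall j, standard_borel R (Y1 j))
  (hY2 : forall j, standard_borel R (Y2 j))
  (hU1 : forall j, hausdorff_space (U1 j) /\ compact [set: U1 j])
  (hU2 : forall j, hausdorff_space (U2 j) /\ compact [set: U2 j])
  (c_meas : measurable_fun [set: Outcome Om U1 U2] c)
  (c_bdd : exists M : R, forall x, `|c x| <= M)
  (c_cont : forall w : Om,
     continuous (fun u : prod_topology U1 * prod_topology U2 =>
                   c (w, u.1, u.2)))
  (mu_ : nat -> probability (Info Om Y1 Y2) R) (mu : probability (Info Om Y1 Y2) R)
  (h_class_n : forall n, in_class (mu_ n))
  (h_class : in_class mu)
  (h_tv : tv_dist (mu_ n) mu @[n --> \oo] --> 0%E) :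
  upper_value c (mu_ n) @[n --> \oo] --> upper_value c mu /\
  lower_value c (mu_ n) @[n --> \oo] --> lower_value c mu.
Proof.
move: c_bdd => [M hM].
set M1 := `|M| + 1.
have [tvfin tv0] := (fine_cvgP _ _).1 h_tv.
set dd := fun n => (M1 *+ 16) * fine (tv_dist (mu_ n) mu).
have dd0 : dd n @[n --> \oo] --> 0.
  by rewrite -(mulr0 (M1 *+ 16)); apply: cvgMr.
have key : forall n, tv_dist (mu_ n) mu \is a fin_num ->
  forall p1 p2, admissible p1 -> admissible p2 ->
  (expected_cost c (mu_ n) p1 p2 <= expected_cost c mu p1 p2 + (dd n)%:E)%E /\
  (expected_cost c mu p1 p2 <= expected_cost c (mu_ n) p1 p2 + (dd n)%:E)%E.
  move=> n ftv p1 p2 a1 a2.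
  set e0 := M1 * fine (tv_dist (mu_ n) mu).
  have base : forall z1 z2,
    [/\ @fbnd R M (\int[mu_ n]_x
          (c (x.1.1, team_actions p1 x.1.2 z1, team_actions p2 x.2 z2))%:E)%E,
        @fbnd R M (\int[mu]_x
          (c (x.1.1, team_actions p1 x.1.2 z1, team_actions p2 x.2 z2))%:E)%E &
        `|fine (\int[mu_ n]_x
          (c (x.1.1, team_actions p1 x.1.2 z1, team_actions p2 x.2 z2))%:E)%E -
          fine (\int[mu]_x
          (c (x.1.1, team_actions p1 x.1.2 z1, team_actions p2 x.2 z2))%:E)%E|
          <= e0].
    move=> z1 z2; split.
    - by have [r [Hr ?]] := @I_fin _ _ _ (mu_ n) (fun x : Info Om Y1 Y2 => c (x.1.1, team_actions p1 x.1.2 z1, team_actions p2 x.2 z2)) M (fun x => hM _); exists r.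
    - by have [r [Hr ?]] := @I_fin _ _ _ mu (fun x : Info Om Y1 Y2 => c (x.1.1, team_actions p1 x.1.2 z1, team_actions p2 x.2 z2)) M (fun x => hM _); exists r.
    - by apply: tv_step; [exact: g_meas|move=> x; exact: hM|exact: ftv].
  have mid : forall z1,
    [/\ @fbnd R M (\int[p2.1]_z2 \int[mu_ n]_x
          (c (x.1.1, team_actions p1 x.1.2 z1, team_actions p2 x.2 z2))%:E)%E,
        @fbnd R M (\int[p2.1]_z2 \int[mu]_x
          (c (x.1.1, team_actions p1 x.1.2 z1, team_actions p2 x.2 z2))%:E)%E &
        `|fine (\int[p2.1]_z2 \int[mu_ n]_x
          (c (x.1.1, team_actions p1 x.1.2 z1, team_actions p2 x.2 z2))%:E)%E -
          fine (\int[p2.1]_z2 \int[mu]_x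
          (c (x.1.1, team_actions p1 x.1.2 z1, team_actions p2 x.2 z2))%:E)%E|
          <= e0 *+ 4].
    move=> z1; apply: layer.
    - by move=> z2; have [] := base z1 z2.
    - by move=> z2; have [] := base z1 z2.
    - by move=> z2; have [] := base z1 z2.
  have [t1 t2 t3] : [/\ @fbnd R M (expected_cost c (mu_ n) p1 p2),
       @fbnd R M (expected_cost c mu p1 p2) &
       `|fine (expected_cost c (mu_ n) p1 p2) - fine (expected_cost c mu p1 p2)|
         <= (e0 *+ 4) *+ 4].
    apply: layer.
    - by move=> z1; have [] := mid z1.
    - by move=> z1; have [] := mid z1.
    - by move=> z1; have [] := mid z1.
  apply: fbnd_close t1 t2 _.
  apply: le_trans t3 _; rewrite /dd /e0 -mulrnA -mulrnAl; exact: lexx.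
split.
- apply: (@close_cvg R _ _ dd dd0); near=> n.
  have ftv : tv_dist (mu_ n) mu \is a fin_num by near: n.
  split.
  + rewrite /upper_value.
    apply: (@inf_close R _ (@admissible R _ _ Y1 U1) (fun p1 => ereal_sup [set expected_cost c (mu_ n) p1 p2 | p2 in (@admissible R _ _ Y2 U2)]) (fun p1 => ereal_sup [set expected_cost c mu p1 p2 | p2 in (@admissible R _ _ Y2 U2)]) (dd n)) => p1 a1.
    apply: (@sup_close R _ (@admissible R _ _ Y2 U2) (fun p2 => expected_cost c (mu_ n) p1 p2) (fun p2 => expected_cost c mu p1 p2) (dd n)) => p2 a2.
    exact: (key n ftv p1 p2 a1 a2).1.
  + rewrite /upper_value.
    apply: (@inf_close R _ (@admissible R _ _ Y1 U1) (fun p1 => ereal_sup [set expected_cost c mu p1 p2 | p2 in (@admissible R _ _ Y2 U2)]) (fun p1 => ereal_sup [set expected_cost c (mu_ n) p1 p2 | p2 in (@admissible R _ _ Y2 U2)]) (dd n)) => p1 a1.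
    apply: (@sup_close R _ (@admissible R _ _ Y2 U2) (fun p2 => expected_cost c mu p1 p2) (fun p2 => expected_cost c (mu_ n) p1 p2) (dd n)) => p2 a2.
    exact: (key n ftv p1 p2 a1 a2).2.
- apply: (@close_cvg R _ _ dd dd0); near=> n.
  have ftv : tv_dist (mu_ n) mu \is a fin_num by near: n.
  split.
  + rewrite /lower_value.
    apply: (@sup_close R _ (@admissible R _ _ Y2 U2) (fun p2 => ereal_inf [set expected_cost c (mu_ n) p1 p2 | p1 in (@admissible R _ _ Y1 U1)]) (fun p2 => ereal_inf [set expected_cost c mu p1 p2 | p1 in (@admissible R _ _ Y1 U1)]) (dd n)) => p2 a2.
    apply: (@inf_close R _ (@admissible R _ _ Y1 U1) (fun p1 => expected_cost c (mu_ n) p1 p2) (fun p1 => expected_cost c mu p1 p2) (dd n)) => p1 a1.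
    exact: (key n ftv p1 p2 a1 a2).1.
  + rewrite /lower_value.
    apply: (@sup_close R _ (@admissible R _ _ Y2 U2) (fun p2 => ereal_inf [set expected_cost c mu p1 p2 | p1 in (@admissible R _ _ Y1 U1)]) (fun p2 => ereal_inf [set expected_cost c (mu_ n) p1 p2 | p1 in (@admissible R _ _ Y1 U1)]) (dd n)) => p2 a2.
    apply: (@inf_close R _ (@admissible R _ _ Y1 U1) (fun p1 => expected_cost c mu p1 p2) (fun p1 => expected_cost c (mu_ n) p1 p2) (dd n)) => p1 a1.
    exact: (key n ftv p1 p2 a1 a2).2.
Unshelve. all: by end_near.
Qed.
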